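(* For any i--lattice $L$, ${\rm Con}_{\mathbb{I}}(L)=\{\theta\in{\rm Con}(L): \theta=\theta'\}=\{\theta\vee\theta' : \theta\in{\rm Con}(L)\}=\{\theta\cap\theta' : \theta\in{\rm Con}(L)\}=\{\theta\in{\rm Con}(L): (\forall x\in L)\ ((x/\theta)'=x'/\theta)\}=\{\theta\in{\rm Con}(L): (\forall\gamma\in L/\theta)\ (\gamma'\in L/\theta)\}$.
   Context: An i--lattice is a lattice $L$ with a unary operation $'$ such that $a''=a$ and $a\leq b\Rightarrow b'\leq a'$. ${\rm Con}(L)$ is the lattice of lattice congruences of $L$ (joins $\vee$ taken in ${\rm Con}(L)$); ${\rm Con}_{\mathbb{I}}(L)$ is the set of $\theta\in{\rm Con}(L)$ with $(a,b)\in\theta\Rightarrow(a',b')\in\theta$. For $\theta\subseteq L^2$, $\theta'=\{(a',b'):(a,b)\in\theta\}$; for $M\subseteq L$, $M'=\{x':x\in M\}$; $x/\theta$ is the class of $x$ and $L/\theta$ the set of classes. *)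

(* Defs.v *)
From HB Require Import structures.
From mathcomp Require Import all_boot all_order.
Set Implicit Arguments. Unset Strict Implicit. Unset Printing Implicit Defensive.
Import Order.TTheory.
Local Open Scope order_scope.

Section ILattice.
Context {d : Order.disp_t} {L : latticeType d}.

(* i-lattice axioms for a unary operation inv ("'") *)
Definition involutive_op (inv : L -> L) : Prop := forall a, inv (inv a) = a.
Definition antitone_op (inv : L -> L) : Prop := forall a b, a <= b -> inv b <= inv a.

Definition is_con (t : L -> L -> Prop) : Prop :=
  [/\ (forall a, t a a),
      (forall a b, t a b -> t b a),
      (forall a b c, t a b -> t b c -> t a c),
      (forall a b c e, t a b -> t c e -> t (a `&` c) (b `&` e)) &
      (forall a b c e, t a b -> t c e -> t (a `|` c) (b `|` e))].

Definition is_con_I (inv : L -> L) (t : L -> L -> Prop) : Prop :=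
  is_con t /\ (forall a b, t a b -> t (inv a) (inv b)).

Definition rel_inv (inv : L -> L) (t : L -> L -> Prop) : L -> L -> Prop :=
  fun x y => exists a b, t a b /\ x = inv a /\ y = inv b.

(* join in Con(L): the least congruence containing both (intersection of all
   congruences containing both) *)
Definition con_join (t s : L -> L -> Prop) : L -> L -> Prop :=
  fun x y => forall u, is_con u -> (forall a b, t a b -> u a b) ->
                       (forall a b, s a b -> u a b) -> u x y.

Definition rel_cap (t s : L -> L -> Prop) : L -> L -> Prop :=
  fun x y => t x y /\ s x y.

Definition cls (t : L -> L -> Prop) (x : L) : L -> Prop := fun y => t x y.

Definition set_inv (inv : L -> L) (M : L -> Prop) : L -> Prop :=
  fun y => exists x, M x /\ y = inv x.

Definition in_quot (t : L -> L -> Prop) (g : L -> Prop) : Prop :=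
  exists x, g = cls t x.

End ILattice.

(* Main.v *)
Require Import Defs.
From HB Require Import structures.
From mathcomp Require Import all_boot all_order.
From Stdlib Require Import FunctionalExtensionality PropExtensionality.
Import Order.TTheory.
Local Open Scope order_scope.

Section Aux.
Variables (d : Order.disp_t) (L : latticeType d) (inv : L -> L).
Hypothesis Hinv : involutive_op inv.
Hypothesis Hanti : antitone_op inv.

Lemma inv_le a b : (inv a <= inv b) = (b <= a).
Proof.
apply/idP/idP => h; last exact: Hanti.
by rewrite -(Hinv a) -(Hinv b); apply: Hanti.
Qed.

Lemma inv_meet a b : inv (a `&` b) = inv a `|` inv b.
Proof.
apply: le_anti; apply/andP; split.
  rewrite -inv_le Hinv lexI; apply/andP; split.
    by rewrite -[X in _ <= X](Hinv a) inv_le leUl.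
  by rewrite -[X in _ <= X](Hinv b) inv_le leUr.
by rewrite leUx !inv_le leIl leIr.
Qed.

Lemma inv_join a b : inv (a `|` b) = inv a `&` inv b.
Proof.
apply: le_anti; apply/andP; split.
  by rewrite lexI !inv_le leUl leUr.
rewrite -inv_le Hinv leUx; apply/andP; split.
  by rewrite -[X in X <= _](Hinv a) inv_le leIl.
by rewrite -[X in X <= _](Hinv b) inv_le leIr.
Qed.

Lemma rel_invE (u : L -> L -> Prop) x y : rel_inv inv u x y <-> u (inv x) (inv y).
Proof.
split; first by case=> a [b [h [-> ->]]]; rewrite !Hinv.
by move=> h; exists (inv x), (inv y); rewrite !Hinv.
Qed.

Lemma rel_inv_con (u : L -> L -> Prop) : is_con u -> is_con (rel_inv inv u).
Proof.
case=> r s t m j; split.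
- by move=> a; apply/rel_invE.
- by move=> a b /rel_invE h; apply/rel_invE; auto.
- by move=> a b c /rel_invE h1 /rel_invE h2; apply/rel_invE; eauto.
- by move=> a b c e /rel_invE h1 /rel_invE h2; apply/rel_invE; rewrite !inv_meet; auto.
- by move=> a b c e /rel_invE h1 /rel_invE h2; apply/rel_invE; rewrite !inv_join; auto.
Qed.

Lemma con_join_con (s s' : L -> L -> Prop) : is_con (con_join s s').
Proof.
split.
- by move=> a u [r _ _ _ _].
- by move=> a b h u hu h1 h2; case: (hu) => _ sy _ _ _; apply: sy; apply: h.
- by move=> a b c h h' u hu h1 h2; case: (hu) => _ _ tr _ _; apply: tr (h u hu h1 h2) (h' u hu h1 h2).
- by move=> a b c e h h' u hu h1 h2; case: (hu) => _ _ _ m _; apply: m (h u hu h1 h2) (h' u hu h1 h2).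
- by move=> a b c e h h' u hu h1 h2; case: (hu) => _ _ _ _ j; apply: j (h u hu h1 h2) (h' u hu h1 h2).
Qed.

Lemma con_join_self (t : L -> L -> Prop) : is_con t -> con_join t t = t.
Proof.
move=> ht; apply: functional_extensionality => x; apply: functional_extensionality => y.
apply: propositional_extensionality; split.
  by move=> h; apply: h.
by move=> h u hu h1 h2; apply: h1.
Qed.

Lemma rel_cap_con (s s' : L -> L -> Prop) : is_con s -> is_con s' -> is_con (rel_cap s s').
Proof.
case=> r s1 t m j; case=> r' s1' t' m' j'; split.
- by move=> a; split.
- by move=> a b [h h']; split; auto.
- by move=> a b c [h h'] [g g']; split; eauto.
- by move=> a b c e [h h'] [g g']; split; auto.
- by move=> a b c e [h h'] [g g']; split; auto.
Qed.

End Aux.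
Arguments rel_invE {d L inv}.
Arguments rel_inv_con {d L inv}.


Theorem lemma4p4 (d : Order.disp_t) (L : latticeType d) (inv : L -> L)
    (Hinv : involutive_op inv) (Hanti : antitone_op inv) :
  forall t : L -> L -> Prop,
    (is_con_I inv t <-> (is_con t /\ t = rel_inv inv t)) /\
    (is_con_I inv t <-> (exists s, is_con s /\ t = con_join s (rel_inv inv s))) /\
    (is_con_I inv t <-> (exists s, is_con s /\ t = rel_cap s (rel_inv inv s))) /\
    (is_con_I inv t <-> (is_con t /\
        forall x : L, set_inv inv (cls t x) = cls t (inv x))) /\
    (is_con_I inv t <-> (is_con t /\
        forall g : L -> Prop, in_quot t g -> in_quot t (set_inv inv g))).
Proof.
move=> t.
have ext : forall (u v : L -> L -> Prop), (forall x y, u x y <-> v x y) -> u = v.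
  move=> u v h; apply: functional_extensionality => x; apply: functional_extensionality => y.
  exact: propositional_extensionality.
have extp : forall (u v : L -> Prop), (forall x, u x <-> v x) -> u = v.
  move=> u v h; apply: functional_extensionality => x; exact: propositional_extensionality.
have eqinv : forall ht : is_con_I inv t, t = rel_inv inv t.
  case=> _ hi; apply: ext => x y; rewrite rel_invE //; split; first exact: hi.
  by move/hi; rewrite !Hinv.
have clsE : is_con_I inv t -> forall x, set_inv inv (cls t x) = cls t (inv x).
  case=> hc hi x; apply: extp => y; split.
    by case=> z [h ->]; apply: hi.
  move=> h; exists (inv y); split; last by rewrite Hinv.
  by move/hi: h; rewrite Hinv.
split; [|split; [|split; [|split]]].
- split; first by move=> h; split; [case: h|exact: eqinv].
  case=> hc he; split => // a b h; rewrite he in h.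
  exact: (proj1 (rel_invE Hinv t a b) h).
- split.
    move=> h; exists t; split; first by case: h.
    by rewrite -eqinv // con_join_self //; case: h.
  case=> s [hs ->]; split; first exact: con_join_con.
  move=> x y h u hu h1 h2.
  have := h (rel_inv inv u) (rel_inv_con Hinv Hanti _ hu).
  rewrite rel_invE //; apply.
    by move=> a b hab; apply/rel_invE => //; apply: h2; apply/rel_invE; rewrite ?Hinv.
  by move=> a b /rel_invE => /(_ Hinv) hab; apply/rel_invE => //; apply: h1.
- split.
    move=> h; exists t; split; first by case: h.
    rewrite -eqinv //; apply: ext => x y; split; first by [].
    by case.
  case=> s [hs ->]; split; first exact: rel_cap_con hs (rel_inv_con Hinv Hanti _ hs).
  move=> x y [h1 h2]; split.
    exact: (proj1 (rel_invE Hinv s x y) h2).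
  by apply: (proj2 (rel_invE Hinv _ _ _)); rewrite !Hinv.
- split; first by move=> h; split; [case: h|exact: clsE].
  case=> hc he; split => // a b h.
  have := f_equal (fun P => P (inv b)) (he a); rewrite /cls /= => <-; by exists b.
- split.
    move=> h; split; first by case: h.
    by move=> g [x ->]; exists (inv x); apply: clsE.
  case=> hc hq; split => // a b h.
  have [z hz] := hq (cls t a) (ex_intro _ a erefl).
  have ha : set_inv inv (cls t a) (inv a).
    by exists a; split => //; case: hc => r _ _ _ _; apply: r.
  rewrite hz in ha.
  have hb : set_inv inv (cls t a) (inv b) by exists b.
  rewrite hz in hb.
  case: hc => _ sy tr _ _; apply: tr (sy _ _ ha) hb.
Qed.
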